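(* Let $1<p<\infty$, $p'=p/(p-1)$, $C\ge1$, and let $X$ be a Banach lattice with a normalized $1$-unconditional basis $(e_i)$ (coordinatewise order), biorthogonal functionals $(e_i^* )$, such that $X$ $C$-lattice embeds into $(\bigoplus_{\mu\in\Gamma}L^{p,\infty}(\mu))_\infty$ for some set $\Gamma$ of measures. Then for every $b=\sum_{i=1}^nb_ie_i^*\in X^*_+$ with $\|b\|=1$ and all subsets $I_1,\dots,I_m\subseteq\{1,\dots,n\}$ such that $\sum_{j=1}^m\chi_{I_j}=l\,\chi_{\{1,\dots,n\}}$ for some $l\in\mathbb N$, we have $$\sum_{j=1}^m\Big\|\sum_{i\in I_j}b_ie_i^*\Big\|^{p'}\le C^{p'}l.$$
   Context: $L^{p,\infty}(\mu)$ is weak-$L^p$ with the norm $\|h\|=\sup\{\mu(A)^{\frac1p-1}\int_A|h|\,d\mu:0<\mu(A)<\infty\}$. A $C$-lattice embedding of $X$ into $Y$ is an injective lattice homomorphism $T$ with $C^{-1}\|x\|\le\|Tx\|\le\|x\|$ for all $x$. *)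

(* Defs.v *)
From HB Require Import structures.
From mathcomp Require Import all_boot all_order all_algebra.
From mathcomp Require Import all_classical all_reals all_analysis.
Set Implicit Arguments. Unset Strict Implicit. Unset Printing Implicit Defensive.
Import Order.TTheory GRing.Theory Num.Theory.
Import numFieldNormedType.Exports.
Local Open Scope classical_set_scope.
Local Open Scope ring_scope.

Section Defs.
Variable R : realType.

(* X is realised (via x |-> (e_i^*(x))_i) as a set of real sequences, with the
   basis vector e_i the i-th unit sequence, coordinatewise order and norm nrm. *)

Definition unit_seq (i : nat) : nat -> R := fun k => if k == i then 1 else 0.

Definition seq_lin (a : R) (x y : nat -> R) : nat -> R := fun i => a * x i + y i.
Definition seq_sub (x y : nat -> R) : nat -> R := fun i => x i - y i.
Definition seq_abs (x : nat -> R) : nat -> R := fun i => `|x i|.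
Definition seq_max (x y : nat -> R) : nat -> R := fun i => Num.max (x i) (y i).
Definition seq_tail (k : nat) (x : nat -> R) : nat -> R :=
  fun i => if (i < k)%N then 0 else x i.

Definition banach_lattice_with_basis (X : set (nat -> R)) (nrm : (nat -> R) -> R) : Prop :=
  [/\
      X (fun _ => 0) /\ (forall a x y, X x -> X y -> X (seq_lin a x y)),
      [/\ forall x, X x -> 0 <= nrm x,
          forall x, X x -> nrm x = 0 -> x = (fun _ => 0),
          forall a x, X x -> nrm (fun i => a * x i) = `|a| * nrm x &
          forall x y, X x -> X y -> nrm (seq_lin 1 x y) <= nrm x + nrm y],
      (forall u : nat -> nat -> R, (forall n, X (u n)) ->
         (forall e : R, 0 < e -> exists N, forall m n, (N <= m)%N -> (N <= n)%N ->
             nrm (seq_sub (u m) (u n)) < e) ->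
         exists2 x, X x & (fun n => nrm (seq_sub (u n) x)) @ \oo --> (0 : R)),
      (forall x, X x -> X (seq_abs x)) /\
      (forall x y, X x -> X y -> (forall i, `|x i| <= `|y i|) -> nrm x <= nrm y) &
      (* normalized Schauder basis (e_i): x = sum_i x_i e_i in norm *)
      [/\ forall i, X (unit_seq i),
          forall i, nrm (unit_seq i) = 1 &
          forall x, X x -> (fun k => nrm (seq_tail k x)) @ \oo --> (0 : R)]].

Definition dual_norm (X : set (nat -> R)) (nrm : (nat -> R) -> R)
  (f : (nat -> R) -> R) : R :=
  sup [set `|f x| | x in [set x | X x /\ nrm x <= 1]].

Definition weak_norm d (T : measurableType d) (mu : {measure set T -> \bar R})
  (p : R) (h : T -> R) : \bar R :=
  ereal_sup ([set 0%E] `|`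
    [set (((fine (mu A)) `^ (p^-1 - 1))%:E * \int[mu]_(t in A) (`|h t|)%:E)%E
       | A in [set A | measurable A /\ (0 < mu A < +oo)%E]]).

Definition linf_sum_norm (Gamma : Type) (d : Gamma -> measure_display)
  (T : forall g, measurableType (d g)) (mu : forall g, {measure set T g -> \bar R})
  (p : R) (h : forall g, T g -> R) : \bar R :=
  ereal_sup ([set 0%E] `|` [set weak_norm (mu g) p (h g) | g in [set: Gamma]]).

Definition in_linf_sum (Gamma : Type) (d : Gamma -> measure_display)
  (T : forall g, measurableType (d g)) (mu : forall g, {measure set T g -> \bar R})
  (p : R) (h : forall g, T g -> R) : Prop :=
  (forall g, measurable_fun [set: T g] (h g)) /\ (linf_sum_norm mu p h < +oo)%E.

(* Tm is a C-lattice embedding of X into (bigoplus L^{p,oo}(mu_g))_oo;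
   elements of the target are identified up to mu_g-a.e. equality in each component. *)
Definition C_lattice_embedding (X : set (nat -> R)) (nrm : (nat -> R) -> R)
  (Gamma : Type) (d : Gamma -> measure_display)
  (T : forall g, measurableType (d g)) (mu : forall g, {measure set T g -> \bar R})
  (p C : R) (Tm : (nat -> R) -> forall g, T g -> R) : Prop :=
  [/\ forall x, X x -> in_linf_sum mu p (Tm x),
      forall a x y, X x -> X y -> forall g,
        {ae mu g, forall t, Tm (seq_lin a x y) g t = a * Tm x g t + Tm y g t},
      forall x y, X x -> X y -> forall g,
        {ae mu g, forall t, Tm (seq_max x y) g t = Num.max (Tm x g t) (Tm y g t)},
      forall x y, X x -> X y -> (forall g, {ae mu g, forall t, Tm x g t = Tm y g t}) -> x = y &
      forall x, X x -> ((C^-1 * nrm x)%:E <= linf_sum_norm mu p (Tm x) /\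
                        linf_sum_norm mu p (Tm x) <= (nrm x)%:E)%E].

End Defs.

(* Main.v *)
Require Import Defs.
From HB Require Import structures.
From mathcomp Require Import all_boot all_order all_algebra.
From mathcomp Require Import all_classical all_reals all_analysis.
From mathcomp Require Import ring lra measurable_realfun.
Import Order.TTheory GRing.Theory Num.Theory.
Import numFieldNormedType.Exports.
Local Open Scope classical_set_scope.
Local Open Scope ring_scope.
Set Implicit Arguments. Unset Strict Implicit.

Definition lc {R : realType} {I : Type} (c : I -> R) (v : I -> nat -> R) (s : seq I) : nat -> R :=
  foldr (fun i acc => seq_lin (c i) (v i) acc) (fun _ => 0) s.

Lemma lc_val (R : realType) I c v s k : @lc R I c v s k = \sum_(i <- s) c i * v i k.
Proof. elim: s => [|i s IH] /=; first by rewrite big_nil. by rewrite big_cons /seq_lin IH. Qed.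

Lemma lc_X (R : realType) (X : set (nat -> R)) nrm I c v s :
  banach_lattice_with_basis X nrm -> (forall i, X (v i)) -> X (@lc R I c v s).
Proof. case=> [[X0 Xlin] _ _ _ _] Xv; elim: s => [|i s IH] //=. exact: Xlin. Qed.

Lemma T_zero (R : realType) (p C : R) (X : set (nat -> R)) (nrm : (nat -> R) -> R)
  (hX : banach_lattice_with_basis X nrm)
  (Gamma : Type) (d : Gamma -> measure_display)
  (T : forall g, measurableType (d g)) (mu : forall g, {measure set T g -> \bar R})
  (Tm : (nat -> R) -> forall g, T g -> R)
  (hT : C_lattice_embedding X nrm mu p C Tm) g :
  {ae mu g, forall t, Tm (fun _ => 0) g t = 0}.
Proof.
case: hX => [[X0 Xlin] _ _ _ _]; case: hT => _ Tlin _ _ _.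
have := Tlin (-1) _ _ X0 X0 g.
have -> : seq_lin (-1) (fun _ : nat => 0) (fun _ => 0) = (fun _ => 0 : R).
  by apply/funext => k; rewrite /seq_lin mulr0 addr0.
by apply: filterS => t ->; rewrite mulN1r addNr.
Qed.

Lemma T_lc (R : realType) (p C : R) (X : set (nat -> R)) (nrm : (nat -> R) -> R)
  (hX : banach_lattice_with_basis X nrm)
  (Gamma : Type) (d : Gamma -> measure_display)
  (T : forall g, measurableType (d g)) (mu : forall g, {measure set T g -> \bar R})
  (Tm : (nat -> R) -> forall g, T g -> R)
  (hT : C_lattice_embedding X nrm mu p C Tm) I c v s g :
  (forall i, X (v i)) ->
  {ae mu g, forall t, Tm (@lc R I c v s) g t = \sum_(i <- s) c i * Tm (v i) g t}.
Proof.
move=> Xv; elim: s => [|i s IH] /=.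
  by have := T_zero hX hT g; apply: filterS => t ->; rewrite big_nil.
have Xs := lc_X c s hX Xv.
case: (hT) => _ Tlin _ _ _.
move: IH; have := Tlin (c i) _ _ (Xv i) Xs g; apply: filterS2 => t -> ->.
by rewrite big_cons.
Qed.


Lemma max_eq_add (R : realType) (a b : R) : Num.max a b = a + b -> a * b = 0.
Proof.
case: (leP a b) => hab H.
  have : a + b - b = b - b by rewrite -H.
  by rewrite addrK subrr => ->; rewrite mul0r.
have : a + b - a = a - a by rewrite -H.
by rewrite [a + b]addrC addrK subrr => ->; rewrite mulr0.
Qed.

Lemma count_le (R : realType) n m (l : nat) (I : 'I_m -> {set 'I_n})
  (hI : forall i : 'I_n, (\sum_(j < m) ((i \in I j) : nat))%N = l)
  (e : 'I_n -> R) (c : 'I_m -> 'I_n -> R)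
  (he : forall i i', i != i' -> e i * e i' = 0) :
  \sum_(j < m) ((\sum_(i in I j) c j i * e i) != 0)%:R <= l%:R :> R.
Proof.
case: (pickP (fun i => e i != 0)) => [i0 hi0 | all0].
  have ez : forall i, i != i0 -> e i = 0.
    move=> i /he H; move/eqP: H; rewrite mulf_eq0 (negbTE hi0) orbF.
    by move=> /eqP.
  rewrite -(hI i0) natr_sum; apply: ler_sum => j _.
  case: (boolP (i0 \in I j)) => hin /=; first by case: (_ != 0).
  rewrite (@big1 _ _ _ _ _ _ (fun i => c j i * e i)); first by rewrite eqxx.
  by move=> i hi; rewrite ez ?mulr0 //; apply: contraNneq hin => <-.
rewrite big1 // => j _.
rewrite big1 ?eqxx // => i _.
by have := all0 i => /= /negbFE/eqP ->; rewrite mulr0.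
Qed.


Lemma X_scale (R : realType) (X : set (nat -> R)) nrm a x :
  banach_lattice_with_basis X nrm -> X x -> X (fun i => a * x i).
Proof.
case=> [[X0 Xlin] _ _ _ _] Xx.
have -> : (fun i => a * x i) = seq_lin a x (fun _ => 0).
  by apply/funext => i; rewrite /seq_lin addr0.
exact: Xlin.
Qed.

Lemma nrm0 (R : realType) (X : set (nat -> R)) (nrm : (nat -> R) -> R) :
  banach_lattice_with_basis X nrm -> nrm (fun _ => 0) = 0.
Proof.
move=> hX; case: (hX) => [[X0 Xlin] [_ _ Nsc _] _ _ _].
have H : nrm (fun i => 0 * (fun _ => 0 : R) i) = 0 by rewrite (Nsc 0 _ X0) normr0 mul0r.
rewrite -[RHS]H; congr (nrm _); apply/funext => i /=; by rewrite mul0r.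
Qed.

Lemma coord_le (R : realType) (X : set (nat -> R)) nrm x k :
  banach_lattice_with_basis X nrm -> X x -> `|x k| <= nrm x.
Proof.
move=> hX Xx; case: (hX) => [[X0 Xlin] [_ _ Nsc _] _ [_ Nmon] [Xu Nu _]].
have Xv := X_scale (x k) hX (Xu k).
have := Nmon _ _ Xv Xx.
rewrite Nsc // Nu mulr1; apply => i.
rewrite /unit_seq; case: eqP => [->|_]; first by rewrite mulr1.
by rewrite mulr0 normr0.
Qed.

Section dn.
End dn.

Lemma dn_has_sup (R : realType) (X : set (nat -> R)) nrm n (P : pred 'I_n) (b : 'I_n -> R) :
  banach_lattice_with_basis X nrm ->
  has_sup [set `|(fun x => \sum_(i < n | P i) b i * x i) x| | x in [set x | X x /\ nrm x <= 1]].
Proof.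
move=> hX; case: (hX) => [[X0 Xlin] _ _ _ _].
split.
  by exists `|\sum_(i < n | P i) b i * (fun _ => 0 : R) i|, (fun _ => 0); split => //; rewrite (nrm0 hX).
exists (\sum_(i < n | P i) `|b i|) => _ [x [Xx Nx] <-].
apply: le_trans (ler_norm_sum _ _ _) _; apply: ler_sum => i _.
rewrite normrM -[leRHS]mulr1; apply: ler_wpM2l => //.
exact: le_trans (coord_le _ hX Xx) Nx.
Qed.

Lemma dn_le (R : realType) (X : set (nat -> R)) nrm n (P : pred 'I_n) (b : 'I_n -> R) x :
  banach_lattice_with_basis X nrm -> X x ->
  `|\sum_(i < n | P i) b i * x i| <= dual_norm X nrm (fun x => \sum_(i < n | P i) b i * x i) * nrm x.
Proof.
move=> hX Xx; case: (hX) => [[X0 Xlin] [Nge0 N0 Nsc _] _ _ _].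
have [nx0|nx0] := eqVneq (nrm x) 0.
  have -> := N0 _ Xx nx0; rewrite (nrm0 hX) mulr0 big1 ?normr0 // => i _; by rewrite mulr0.
have npos : 0 < nrm x by rewrite lt_neqAle eq_sym nx0 Nge0.
have Xu := X_scale (nrm x)^-1 hX Xx.
have Nu : nrm (fun i => (nrm x)^-1 * x i) = 1.
  by rewrite Nsc // ger0_norm ?invr_ge0 ?Nge0 // mulVf.
have Nu' : nrm (fun i => (nrm x)^-1 * x i) <= 1 by rewrite Nu.
have H := sup_upper_bound (dn_has_sup P b hX) (ex_intro2 _ _ _ (conj Xu Nu') erefl).
have E : \sum_(i < n | P i) b i * (fun i => (nrm x)^-1 * x i) i = (nrm x)^-1 * \sum_(i < n | P i) b i * x i.
  by rewrite mulr_sumr; apply: eq_bigr => i _; rewrite mulrCA.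
rewrite /= E in H.
rewrite normrM ger0_norm ?invr_ge0 ?Nge0 // in H.
have := ler_wpM2l (Nge0 x Xx) H; rewrite mulrA mulfV // mul1r mulrC; exact.
Qed.

Lemma dn_adh (R : realType) (X : set (nat -> R)) nrm n (P : pred 'I_n) (b : 'I_n -> R) e :
  banach_lattice_with_basis X nrm -> 0 < e ->
  exists x, [/\ X x, nrm x <= 1 &
   dual_norm X nrm (fun x => \sum_(i < n | P i) b i * x i) - e < `|\sum_(i < n | P i) b i * x i|].
Proof.
move=> hX e0; have [_ [x [Xx Nx] <-] H] := sup_adherent e0 (dn_has_sup P b hX).
by exists x.
Qed.


Lemma conj_inv (R : realType) (p : R) : 1 < p -> (p / (p - 1))^-1 = 1 - p^-1.
Proof.
move=> hp; have p0 : p != 0 by rewrite gt_eqF // (lt_trans ltr01).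
by rewrite invf_div; field.
Qed.

Lemma young_sum (R : realType) (p : R) (hp : 1 < p) (a : R) (ha : 0 < a) m (l : nat)
  (w u : 'I_m -> R) (w0 : forall j, 0 <= w j) (u0 : forall j, 0 <= u j)
  (hu : \sum_j u j <= l%:R * a) :
  a `^ (p^-1 - 1) * \sum_j w j * u j `^ (1 - p^-1) <= \sum_j w j `^ p / p + l%:R / (p / (p - 1)).
Proof.
have p0 : 0 < p by rewrite (lt_trans ltr01).
set q := p / (p - 1).
have q0 : 0 < q by rewrite divr_gt0 // subr_gt0.
have pq : p^-1 + q^-1 = 1 by rewrite /q conj_inv // addrC subrK.
have qi : q^-1 = 1 - p^-1 by rewrite conj_inv.
rewrite mulr_sumr.
apply: (@le_trans _ _ (\sum_j (w j `^ p / p + (u j / a) / q))).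
  apply: ler_sum => j _.
  have -> : a `^ (p^-1 - 1) * (w j * u j `^ (1 - p^-1)) = w j * (u j / a) `^ (q^-1).
    rewrite qi powRM ?invr_ge0 ?(ltW ha) ?u0 // -(powR_inv1 (ltW ha)) -powRrM.
    by rewrite mulN1r opprB mulrCA [X in _ * X = _]mulrC.
  apply: le_trans (conjugate_powR (w0 j) (powR_ge0 (u j / a) q^-1) p0 q0 pq) _.
  rewrite -powRrM mulVf ?gt_eqF // powRr1 //; exact: divr_ge0 (u0 j) (ltW ha).
rewrite big_split /= lerD2l -mulr_suml -mulr_suml.
rewrite ler_pM2r ?invr_gt0 // ler_pdivrMr //.
Qed.


Lemma int_bound (R : realType) d (T : measurableType d) (mu : {measure set T -> \bar R}) (p : R) (hp : 1 < p)
  (h : T -> R) (mh : measurable_fun setT h)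
  (hb : forall B, measurable B -> (0 < mu B < +oo)%E ->
      (((fine (mu B)) `^ (p^-1 - 1))%:E * \int[mu]_(t in B) (`|h t|)%:E <= 1)%E)
  B (mB : measurable B) (hB : (mu B < +oo)%E) :
  (\int[mu]_(t in B) (`|h t|)%:E <= ((fine (mu B)) `^ (1 - p^-1))%:E)%E.
Proof.
have [B0|Bpos] := eqVneq (mu B) 0%E.
  rewrite (@null_set_integral _ _ _ mu B) // ?lee_fin ?powR_ge0 //.
  apply: measurable_funS (_ : measurable_fun setT _) => //.
  by apply/measurable_EFinP; apply: measurableT_comp.
have Bp : (0 < mu B)%E by rewrite lt0e Bpos measure_ge0.
have hB' := hb B mB (_ : (0 < mu B < +oo)%E); rewrite Bp hB in hB'.
have {hB'} hB' := hB' erefl.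
have c0 : 0 < fine (mu B) by rewrite fine_gt0 // Bp hB.
have E1 : fine (mu B) `^ (1 - p^-1) * fine (mu B) `^ (p^-1 - 1) = 1.
  rewrite -powRD; last by apply/implyP => _; rewrite gt_eqF.
  have -> : (1 - p^-1 + (p^-1 - 1) : R) = 0 by ring.
  by rewrite powRr0.
have -> : (\int[mu]_(t in B) (`|h t|)%:E = (fine (mu B) `^ (1 - p^-1))%:E * ((fine (mu B) `^ (p^-1 - 1))%:E * \int[mu]_(t in B) (`|h t|)%:E))%E.
  by rewrite muleA -EFinM E1 mul1e.
rewrite -[X in (_ <= X)%E]mule1.
have H0 : (0 <= (fine (mu B) `^ (1 - p^-1))%:E)%E by rewrite lee_fin powR_ge0.
exact: (lee_wpmul2l H0 hB').
Qed.

Lemma core (R : realType) d (T : measurableType d) (mu : {measure set T -> \bar R}) (p : R) (hp : 1 < p)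
  m (l : nat) (f : T -> R) (fj : 'I_m -> T -> R) (w : 'I_m -> R)
  (mf : measurable_fun setT f) (mfj : forall j, measurable_fun setT (fj j)) (w0 : forall j, 0 <= w j)
  (hf : {ae mu, forall t, f t = \sum_j w j * fj j t})
  (hc : {ae mu, forall t, \sum_j ((fj j t != 0)%:R : R) <= l%:R})
  (hb : forall j B, measurable B -> (0 < mu B < +oo)%E ->
      (((fine (mu B)) `^ (p^-1 - 1))%:E * \int[mu]_(t in B) (`|fj j t|)%:E <= 1)%E)
  A (mA : measurable A) (hA : (0 < mu A < +oo)%E) :
  (((fine (mu A)) `^ (p^-1 - 1))%:E * \int[mu]_(t in A) (`|f t|)%:E
    <= (\sum_j w j `^ p / p + l%:R / (p / (p - 1)))%:E)%E.
Proof.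
have a0 : 0 < fine (mu A) by rewrite fine_gt0.
have Afin : mu A \is a fin_num by rewrite ge0_fin_numE ?measure_ge0 //; case/andP: hA.
pose U j := [set t | fj j t != 0].
have mU : forall j, measurable (U j).
  move=> j; have := mfj j measurableT _ (measurableC (measurable_set1 (0:R))).
  rewrite setTI; congr measurable; apply/seteqP; split => t /=; rewrite /U /=.
    by move/eqP.
  by move=> /eqP.
have mAU : forall j, measurable (A `&` U j) by move=> j; exact: measurableI.
have AUfin : forall j, (mu (A `&` U j) < +oo)%E.
  move=> j; apply: le_lt_trans (_ : mu A < +oo)%E; last by case/andP: hA.
  by apply: le_measure; rewrite ?inE //; apply: subIsetl.
pose u j := fine (mu (A `&` U j)).
have u0 : forall j, 0 <= u j by move=> j; rewrite fine_ge0 // measure_ge0.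
have mabs : forall g : T -> R, measurable_fun setT g -> measurable_fun setT (fun t => (`|g t|)%:E).
  by move=> g mg; apply/measurable_EFinP; apply: measurableT_comp.
have hint : forall j, (\int[mu]_(t in A) (`|fj j t|)%:E <= (u j `^ (1 - p^-1))%:E)%E.
  move=> j.
  have -> : (\int[mu]_(t in A) (`|fj j t|)%:E = \int[mu]_(t in A `&` U j) (`|fj j t|)%:E)%E.
    rewrite integral_mkcondr; apply: eq_integral => t _; rewrite patchE.
    case: ifPn => // /negP tU; have : fj j t = 0.
      by apply/eqP/negPn/negP => H; apply: tU; rewrite in_setE.
    by move=> ->; rewrite normr0.
  have H := @int_bound _ _ _ mu p hp _ (mfj j) (hb j) _ (mAU j) (AUfin j); exact: H.
have ind : forall j t, (t \in U j) = (fj j t != 0).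
  by move=> j t; apply/idP/idP; rewrite in_setE.
have hsum : \sum_j u j <= l%:R * fine (mu A).
  rewrite -lee_fin -sumEFin.
  have -> : (\sum_j (u j)%:E = \sum_j mu (A `&` U j))%E.
    by apply: eq_bigr => j _; rewrite /u fineK // ge0_fin_numE ?measure_ge0 ?AUfin.
  have -> : (\sum_j mu (A `&` U j) = \sum_j \int[mu]_(t in A) (\1_(U j) t)%:E)%E.
    by apply: eq_bigr => j _; rewrite integral_indic // setIC.
  rewrite -ge0_integral_sum //; last first.
    by move=> j; apply/measurable_EFinP; exact: measurable_indic.
  under eq_integral do rewrite sumEFin.
  apply: le_trans (@ae_ge0_le_integral _ _ _ mu A mA _ (fun _ => (l%:R)%:E) _ _ _ _ _) _.
  - by move=> t _; rewrite lee_fin sumr_ge0 // => j _; rewrite indicE.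
  - apply/measurable_EFinP; apply: measurable_sum => j; exact: measurable_indic.
  - by move=> t _; rewrite lee_fin.
  - by [].
  - apply: filterS hc => t H _; rewrite lee_fin.
    by under eq_bigr do rewrite indicE ind.
  by rewrite integral_cst // -(fineK Afin) -EFinM.
apply: le_trans (_ : _ <= (fine (mu A) `^ (p^-1 - 1))%:E * (\sum_j w j * u j `^ (1 - p^-1))%:E)%E _; last first.
  by rewrite -EFinM lee_fin; exact: young_sum.
apply: lee_wpmul2l; first by rewrite lee_fin powR_ge0.
apply: le_trans (_ : _ <= \int[mu]_(t in A) (\sum_j w j * `|fj j t|)%:E)%E _.
  apply: ae_ge0_le_integral => //.
  - by apply: measurable_funS (mabs _ mf).
  - by move=> t _; rewrite lee_fin sumr_ge0 // => j _; rewrite mulr_ge0.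
  - apply: measurable_funS (_ : measurable_fun setT _) => //.
    apply/measurable_EFinP; apply: measurable_sum => j.
    by apply: measurable_funM => //; apply: measurableT_comp.
  - apply: filterS hf => t -> _; rewrite lee_fin.
    apply: le_trans (ler_norm_sum _ _ _) _; apply: ler_sum => j _.
    by rewrite normrM ger0_norm.
under eq_integral do rewrite -sumEFin.
rewrite ge0_integral_sum //; last 2 first.
- move=> j; apply: measurable_funS (_ : measurable_fun setT _) => //.
  by apply/measurable_EFinP; apply: measurable_funM => //; apply: measurableT_comp.
- by move=> j t _; rewrite lee_fin mulr_ge0.
rewrite -sumEFin; apply: lee_sum => j _.
rewrite EFinM.
under eq_integral do rewrite EFinM.
rewrite ge0_integralZl //; last 2 first.
- by apply: measurable_funS (mabs _ (mfj j)).
- by rewrite lee_fin.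
apply: lee_wpmul2l; first by rewrite lee_fin.
exact: hint.
Qed.



Lemma T_disj (R : realType) (p C : R) (X : set (nat -> R)) (nrm : (nat -> R) -> R)
  (hX : banach_lattice_with_basis X nrm)
  (Gamma : Type) (d : Gamma -> measure_display)
  (T : forall g, measurableType (d g)) (mu : forall g, {measure set T g -> \bar R})
  (Tm : (nat -> R) -> forall g, T g -> R)
  (hT : C_lattice_embedding X nrm mu p C Tm) g (i i' : nat) : i != i' ->
  {ae mu g, forall t, Tm (unit_seq R i) g t * Tm (unit_seq R i') g t = 0}.
Proof.
move=> ii'.
case: hX => _ _ _ _ [Xu _ _]; case: hT => _ Tlin Tmax _ _.
have E : seq_max (unit_seq R i) (unit_seq R i') = seq_lin 1 (unit_seq R i) (unit_seq R i').
  apply/funext => k; rewrite /seq_max /seq_lin /unit_seq mul1r.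
  case: eqP => [ki|_]; case: eqP => [ki'|_].
  - by move: ii'; rewrite -ki -ki' eqxx => /negP.
  - by rewrite addr0 max_l ?ler01.
  - by rewrite add0r max_r ?ler01.
  - by rewrite addr0 maxxx.
move: (Tlin 1 _ _ (Xu i) (Xu i') g); have := Tmax _ _ (Xu i) (Xu i') g.
apply: filterS2 => t H1 H2; apply: max_eq_add.
by rewrite -H1 E H2 mul1r.
Qed.

Definition yv (R : realType) n (J : {set 'I_n}) (x : nat -> R) : nat -> R :=
  lc (fun i : 'I_n => `|x i|) (fun i : 'I_n => unit_seq R i) (enum J).

Lemma yv_val (R : realType) n (J : {set 'I_n}) (x : nat -> R) k :
  yv J x k = \sum_(i in J) `|x i| * unit_seq R i k.
Proof. by rewrite /yv lc_val big_enum. Qed.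

Lemma unit_sum (R : realType) n (J : {set 'I_n}) k : \sum_(i in J) unit_seq R i k <= 1.
Proof.
apply: le_trans (_ : _ <= \sum_(i < n) unit_seq R i k) _.
  by rewrite [leRHS](bigID (fun i => i \in J)) /= lerDl sumr_ge0 // => i _; rewrite /unit_seq; case: eqP.
case: (ltnP k n) => hk.
  rewrite (bigD1 (Ordinal hk)) //= big1 ?addr0 /unit_seq ?eqxx // => i hi.
  case: eqP => // ki; move: hi; rewrite -val_eqE /= ki eqxx //.
by rewrite big1 // => i _; rewrite /unit_seq; case: eqP => // ki; move: (ltn_ord i); rewrite -ki ltnNge hk.
Qed.

Lemma yv_le (R : realType) n (J : {set 'I_n}) (x : nat -> R) k : `|yv J x k| <= `|x k|.
Proof.
rewrite yv_val ger0_norm; last by rewrite sumr_ge0 // => i _; rewrite mulr_ge0 // /unit_seq; case: eqP.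
have -> : \sum_(i in J) `|x i| * unit_seq R i k = `|x k| * \sum_(i in J) unit_seq R i k.
  rewrite mulr_sumr; apply: eq_bigr => i _; rewrite /unit_seq; case: eqP => [->|]; by rewrite ?mulr0.
by rewrite -[leRHS]mulr1 ler_wpM2l // unit_sum.
Qed.

Lemma yv_b (R : realType) n (J : {set 'I_n}) (x : nat -> R) (b : 'I_n -> R) :
  \sum_(i < n) b i * yv J x i = \sum_(i in J) b i * `|x i|.
Proof.
under eq_bigr do rewrite yv_val mulr_sumr.
rewrite exchange_big /=; apply: eq_bigr => i _.
rewrite (bigD1 i) //= big1 ?addr0 /unit_seq ?eqxx ?mulr1 1?mulrC // => i' hi.
case: eqP => [/val_inj ii'|]; last by rewrite !mulr0.
by move: hi; rewrite ii' eqxx.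
Qed.


Lemma final_alg (R : realType) (p C : R) (hp : 1 < p) (hC : 1 <= C) m (l : nat) (beta : 'I_m -> R)
  (b0 : forall j, 0 <= beta j)
  (key : forall w : 'I_m -> R, (forall j, 0 <= w j) ->
     \sum_j w j * beta j <= C * (\sum_j w j `^ p / p + l%:R / (p / (p - 1)))) :
  \sum_j beta j `^ (p / (p - 1)) <= C `^ (p / (p - 1)) * l%:R.
Proof.
have p0 : 0 < p by rewrite (lt_trans ltr01).
have p10 : 0 < p - 1 by rewrite subr_gt0.
have C0 : 0 < C by rewrite (lt_le_trans ltr01).
set q := p / (p - 1).
have q0 : 0 < q by rewrite divr_gt0.
have qi : q^-1 = 1 - p^-1 by rewrite conj_inv.
set s := C `^ (1 - q).
have s0 : 0 < s by rewrite powR_gt0.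
set S := \sum_j beta j `^ q.
have := key (fun j => s * beta j `^ (q - 1)) (fun j => mulr_ge0 (ltW s0) (powR_ge0 _ _)).
have -> : \sum_j s * beta j `^ (q - 1) * beta j = s * S.
  rewrite /S mulr_sumr; apply: eq_bigr => j _.
  by rewrite -mulrA [_ * beta j]mulrC mulr_powRB1.
have -> : \sum_j (s * beta j `^ (q - 1)) `^ p / p = s `^ p * S / p.
  rewrite /S mulr_sumr mulr_suml; apply: eq_bigr => j _.
  rewrite powRM ?(ltW s0) ?powR_ge0 // -powRrM.
  have -> : (q - 1) * p = q by rewrite /q; field; rewrite gt_eqF.
  by [].
have Csp : C * s `^ p = s.
  rewrite /s -powRrM -[X in X * _]powRr1 ?(ltW C0) // -powRD; last by apply/implyP => _; rewrite gt_eqF.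
  congr (_ `^ _); rewrite /q; field; rewrite gt_eqF //.
rewrite mulrDr !mulrA Csp => H.
have H2 : s * S * (1 - p^-1) <= C * l%:R / q.
  move: H; set P := p^-1; set Q := q^-1; set Z := s * S; lra.
rewrite -qi in H2.
have H3 : s * S <= C * l%:R by move: H2; rewrite ler_pM2r ?invr_gt0.
have -> : C `^ q = C * s^-1.
  rewrite /s -powRN -[X in X * _]powRr1 ?(ltW C0) // -powRD; last by apply/implyP => _; rewrite gt_eqF.
  congr (_ `^ _); ring.
by rewrite mulrAC ler_pdivlMr // mulrC.
Qed.


Lemma key_lemma (R : realType) (p C : R) (hp : 1 < p) (hC : 1 <= C)
  (X : set (nat -> R)) (nrm : (nat -> R) -> R)
  (hX : banach_lattice_with_basis X nrm)
  (Gamma : Type) (d : Gamma -> measure_display)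
  (T : forall g, measurableType (d g)) (mu : forall g, {measure set T g -> \bar R})
  (Tm : (nat -> R) -> forall g, T g -> R)
  (hT : C_lattice_embedding X nrm mu p C Tm)
  (n : nat) (b : 'I_n -> R)
  (bpos : forall x, X x -> (forall i, 0 <= x i) -> 0 <= \sum_(i < n) b i * x i)
  (bnorm : dual_norm X nrm (fun x => \sum_(i < n) b i * x i) = 1)
  (m l : nat) (I : 'I_m -> {set 'I_n})
  (hI : forall i : 'I_n, (\sum_(j < m) ((i \in I j) : nat))%N = l)
  (w : 'I_m -> R) (w0 : forall j, 0 <= w j) :
  \sum_j w j * dual_norm X nrm (fun x => \sum_(i < n | i \in I j) b i * x i)
    <= C * (\sum_j w j `^ p / p + l%:R / (p / (p - 1))).
Proof.
have p0 : 0 < p by rewrite (lt_trans ltr01).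
have C0 : 0 < C by rewrite (lt_le_trans ltr01).
case: (hX) => [[X0 Xlin] [Nge0 N0 Nsc Ntri] _ [Xabs Nmon] [Xu Nu Ntail]].
case: (hT) => Tin Tlin Tmax Tinj Tnorm.
have b0 : forall i, 0 <= b i.
  move=> i; have u0 : forall k, 0 <= unit_seq R i k by move=> k; rewrite /unit_seq; case: eqP.
  have := bpos _ (Xu i) u0.
  rewrite (bigD1 i) //= big1; first by rewrite addr0 /unit_seq eqxx mulr1.
  move=> i' hi; rewrite /unit_seq; case: eqP => [/val_inj ii'|]; last by rewrite mulr0.
  by move: hi; rewrite ii' eqxx.
apply/ler_addgt0Pr => e e0.
set W := \sum_j w j.
have W0 : 0 <= W by rewrite sumr_ge0.
pose e' := e / (W + 1).
have e'0 : 0 < e' by rewrite divr_gt0 // ltr_wpDl.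
have : forall j, exists x, [/\ X x, nrm x <= 1 &
   dual_norm X nrm (fun x => \sum_(i < n | i \in I j) b i * x i) - e' < `|\sum_(i < n | i \in I j) b i * x i|].
  by move=> j; exact: (dn_adh (fun i => i \in I j) b hX e'0).
case/choice => x hx.
pose y_ j := yv (I j) (x j).
have Xy_ : forall j, X (y_ j).
  move=> j; rewrite /y_ /yv; have := @lc_X _ _ _ _ (fun i : 'I_n => `|x j i|) (fun i : 'I_n => unit_seq R i) (enum (I j)) hX.
  by apply => i; exact: Xu.
pose y := lc w y_ (index_enum 'I_m).
have Xy : X y by rewrite /y; exact: lc_X _ _ hX Xy_.
have h1 : forall j, dual_norm X nrm (fun x => \sum_(i < n | i \in I j) b i * x i) - e'
                    <= \sum_(i < n) b i * y_ j i.
  move=> j; case: (hx j) => _ _ H; apply: (le_trans (ltW H)).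
  rewrite /y_ yv_b; apply: le_trans (ler_norm_sum _ _ _) _.
  by apply: ler_sum => i _; rewrite normrM ger0_norm.
have h2 : \sum_(i < n) b i * y i = \sum_j w j * \sum_(i < n) b i * y_ j i.
  rewrite /y; under eq_bigr do rewrite lc_val mulr_sumr.
  rewrite exchange_big /=; apply: eq_bigr => j _.
  by rewrite mulr_sumr; apply: eq_bigr => i _; rewrite mulrCA.
have h3 : \sum_(i < n) b i * y i <= nrm y.
  have := dn_le xpredT b hX Xy; rewrite bnorm mul1r.
  by apply: le_trans; rewrite ler_norm.
set K := \sum_j w j `^ p / p + l%:R / (p / (p - 1)).
have K0 : 0 <= K.
  rewrite addr_ge0 ?sumr_ge0 // => [j _|]; first by rewrite divr_ge0 ?powR_ge0 // ltW.
  by rewrite divr_ge0 // ltW // divr_gt0 // subr_gt0.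
have ny_ : forall j, nrm (y_ j) <= 1.
  move=> j; case: (hx j) => Xxj Nxj _; apply: le_trans Nxj.
  by apply: Nmon => // k; exact: yv_le.
have hcore : forall g A, measurable A -> (0 < mu g A < +oo)%E ->
   (((fine (mu g A)) `^ (p^-1 - 1))%:E * \int[mu g]_(t in A) (`|Tm y g t|)%:E <= K%:E)%E.
  move=> g A mA hA.
  apply: (@core _ _ _ (mu g) p hp m l (Tm y g) (fun j => Tm (y_ j) g) w) => //.
  - exact: (Tin y Xy).1.
  - by move=> j; exact: (Tin _ (Xy_ j)).1.
  - exact: (T_lc hX hT w (index_enum 'I_m) g Xy_).
  - have H1 : {ae mu g, forall t, forall j, Tm (y_ j) g t = \sum_(i in I j) `|x j i| * Tm (unit_seq R i) g t}.
      apply: filter_forall => j.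
      have := T_lc hX hT (fun i : 'I_n => `|x j i|) (enum (I j)) g (fun i : 'I_n => Xu i).
      by apply: filterS => t H; rewrite /y_ /yv H big_enum.
    have H2 : {ae mu g, forall t, forall ii : 'I_n * 'I_n, ii.1 != ii.2 ->
        Tm (unit_seq R ii.1) g t * Tm (unit_seq R ii.2) g t = 0}.
      apply: filter_forall => -[i i'] /=.
      case: (eqVneq i i') => [<-|ne]; first by apply: aeW => t /negP.
      have ne' : (i : nat) != i' by rewrite val_eqE.
      have := T_disj hX hT g ne'.
      by apply: filterS => t H _; exact: H.
    apply: filterS2 H1 H2 => t E1 E2.
    under eq_bigr do rewrite E1.
    exact: (count_le (e := fun i => Tm (unit_seq R i) g t) hI (fun j i => `|x j i|) (fun i i' h => E2 (i, i') h)).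
  - move=> j B mB hB.
    apply: le_trans (_ : _ <= weak_norm (mu g) p (Tm (y_ j) g))%E _.
      by apply: ereal_sup_ubound; right; exists B.
    apply: le_trans (_ : _ <= linf_sum_norm mu p (Tm (y_ j)))%E _.
      by apply: ereal_sup_ubound; right; exists g.
    by apply: le_trans (Tnorm _ (Xy_ j)).2 _; rewrite lee_fin.
have h4 : nrm y <= C * K.
  have L : (linf_sum_norm mu p (Tm y) <= K%:E)%E.
    apply/ereal_supP => _ [->|[g _ <-]]; first by rewrite lee_fin.
    apply/ereal_supP => _ [->|[A [mA hA] <-]]; first by rewrite lee_fin.
    exact: hcore.
  have := le_trans (Tnorm y Xy).1 L; rewrite lee_fin => H.
  by rewrite -ler_pdivrMl.

apply: le_trans (_ : _ <= \sum_j w j * (\sum_(i < n) b i * y_ j i + e')) _.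
  apply: ler_sum => j _; apply: ler_wpM2l => //; rewrite -lerBlDr; exact: h1.
under eq_bigr do rewrite mulrDr.
rewrite big_split /= -h2 -mulr_suml.
apply: lerD; first exact: le_trans h3 h4.
rewrite /e' mulrA ler_pdivrMr ?ltr_wpDl // -/W mulrC ler_wpM2l ?(ltW e0) //.
by rewrite lerDl.
Qed.

Lemma dn_ge0 (R : realType) (X : set (nat -> R)) nrm n (P : pred 'I_n) (b : 'I_n -> R) :
  banach_lattice_with_basis X nrm ->
  0 <= dual_norm X nrm (fun x => \sum_(i < n | P i) b i * x i).
Proof.
move=> hX; case: (hX) => [[X0 _] _ _ _ _].
have N0 : nrm (fun _ => 0) <= 1 by rewrite (nrm0 hX).
have H := sup_upper_bound (dn_has_sup P b hX) (ex_intro2 _ _ (fun _ => 0) (conj X0 N0) erefl).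
exact: le_trans H.
Qed.

Unset Implicit Arguments.

Theorem corollary4p2 (R : realType) (p C : R) (hp : 1 < p) (hC : 1 <= C)
  (X : set (nat -> R)) (nrm : (nat -> R) -> R)
  (hX : banach_lattice_with_basis X nrm)
  (Gamma : Type) (d : Gamma -> measure_display)
  (T : forall g, measurableType (d g)) (mu : forall g, {measure set T g -> \bar R})
  (Tm : (nat -> R) -> forall g, T g -> R)
  (hT : C_lattice_embedding X nrm mu p C Tm)
  (n : nat) (b : 'I_n -> R)
  (bpos : forall x, X x -> (forall i, 0 <= x i) -> 0 <= \sum_(i < n) b i * x i)
  (bnorm : dual_norm X nrm (fun x => \sum_(i < n) b i * x i) = 1)
  (m l : nat) (I : 'I_m -> {set 'I_n})
  (hI : forall i : 'I_n, (\sum_(j < m) ((i \in I j) : nat))%N = l) :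
  let p' := p / (p - 1) in
  \sum_(j < m) (dual_norm X nrm (fun x => \sum_(i < n | i \in I j) b i * x i)) `^ p'
    <= C `^ p' * l%:R.
Proof.
cbv zeta.
apply: (final_alg hp hC (fun j => dn_ge0 (fun i => i \in I j) b hX)).
move=> w w0.
exact: (key_lemma hp hC hX hT bpos bnorm hI w0).
Qed.
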